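(* Let $\Phi=(V,C)$ be a CNF formula and $\theta\ge0$. Introduce new variables $U=\{u_c: c\in C\}$ and the CNF formula $\Phi'=(V\cup U,C')$ with $C'=\{u_c\lor c: c\in C\}$. Let $\mathcal P$ be the product distribution on $\{0,1\}^{V\cup U}$ in which each $v\in V$ is uniform on $\{0,1\}$ and each $u\in U$ equals $1$ with probability $\exp(-\theta)$ and $0$ with probability $1-\exp(-\theta)$. For $c'\in C'$ let $\mathcal B_{c'}$ be the event that $c'$ is not satisfied. Then for every $X\in\{0,1\}^V$, $$\Pr_{\mathcal P}\Big[\text{each } v\in V \text{ takes the value } X(v)\ \Big|\ \bigwedge_{c'\in C'}\overline{\mathcal B_{c'}}\Big]=\mu_\theta(X),$$ where $\mu_\theta(X)=\frac{\exp(-\theta|F(X)|)}{\sum_{Y\in\{0,1\}^V}\exp(-\theta|F(Y)|)}$ and $F(X)\subseteq C$ is the set of clauses of $\Phi$ not satisfied by $X$.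
   Context: The clause $u_c\lor c$ is satisfied by an assignment if $u_c=1$ or the clause $c$ is satisfied. *)

(* Defs.v *)
From HB Require Import structures.
From mathcomp Require Import all_boot all_order all_algebra.
From mathcomp Require Import all_classical all_reals all_analysis.
Set Implicit Arguments. Unset Strict Implicit. Unset Printing Implicit Defensive.
Import Order.TTheory GRing.Theory Num.Theory.
Local Open Scope ring_scope.

(* A literal over variables of type T is a pair (x, b): it is satisfied by an
   assignment Z when Z x = b (b = true: positive literal x, b = false: ~x). *)
Definition clause (T : finType) := {set (T * bool)}.

Definition clause_sat (T : finType) (Z : {ffun T -> bool}) (c : clause T) : bool :=
  [exists l in c, Z l.1 == l.2].

Definition unsat_clauses (V : finType) (C : {set clause V}) (X : {ffun V -> bool})
  : {set clause V} := [set c in C | ~~ clause_sat X c].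

Definition mu_theta (R : realType) (V : finType) (C : {set clause V}) (theta : R)
  (X : {ffun V -> bool}) : R :=
  expR (- theta * #|unsat_clauses C X|%:R) /
  \sum_(Y : {ffun V -> bool}) expR (- theta * #|unsat_clauses C Y|%:R).

(* The index type of the new variables u_c, c \in C. *)
Definition clauseIdx (V : finType) (C : {set clause V}) : finType :=
  {c : clause V | c \in C}.

Definition vars' (V : finType) (C : {set clause V}) : finType :=
  (V + clauseIdx C)%type.

Definition ext_clause (V : finType) (C : {set clause V}) (c : clauseIdx C)
  : clause (vars' C) :=
  (inr c, true) |: [set (inl l.1, l.2) | l in val c].

Definition ext_clauses (V : finType) (C : {set clause V}) : {set clause (vars' C)} :=
  [set ext_clause c | c : clauseIdx C].

Definition marg (R : realType) (V : finType) (C : {set clause V}) (theta : R)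
  (x : vars' C) (b : bool) : R :=
  match x with
  | inl _ => 2^-1
  | inr _ => if b then expR (- theta) else 1 - expR (- theta)
  end.

Definition prodP (R : realType) (V : finType) (C : {set clause V}) (theta : R)
  (Z : {ffun vars' C -> bool}) : R :=
  \prod_(x : vars' C) marg theta x (Z x).

Definition PrP (R : realType) (V : finType) (C : {set clause V}) (theta : R)
  (E : pred {ffun vars' C -> bool}) : R :=
  \sum_(Z | E Z) prodP theta Z.

Definition all_sat' (V : finType) (C : {set clause V}) (Z : {ffun vars' C -> bool}) : bool :=
  [forall c' in ext_clauses C, clause_sat Z c'].

Definition agrees (V : finType) (C : {set clause V}) (X : {ffun V -> bool})
  (Z : {ffun vars' C -> bool}) : bool :=
  [forall v : V, Z (inl v) == X v].

Definition condPr (R : realType) (V : finType) (C : {set clause V}) (theta : R)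
  (A B : pred {ffun vars' C -> bool}) : R :=
  PrP theta (fun Z => A Z && B Z) / PrP theta B.

(* Main.v *)
Require Import Defs.
From HB Require Import structures.
From mathcomp Require Import all_boot all_order all_algebra.
From mathcomp Require Import all_classical all_reals all_analysis.
Import Order.TTheory GRing.Theory Num.Theory.
Local Open Scope ring_scope.

Section Proof7p9.
Variables (R : realType) (V : finType) (C : {set clause V}) (theta : R).

Definition ind (X : {ffun V -> bool}) (x : vars' C) (b : bool) : bool :=
  match x with
  | inl v => b == X v
  | inr c => clause_sat X (val c) || b
  end.

Definition G (X : {ffun V -> bool}) (x : vars' C) b : R := if ind X x b then marg theta x b else 0.

Lemma ext_sat (X : {ffun V -> bool}) (Z : {ffun vars' C -> bool}) (c : clauseIdx C) :
  (forall v, Z (inl v) = X v) ->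
  clause_sat Z (ext_clause c) = Z (inr c) || clause_sat X (val c).
Proof.
move=> ag; apply/idP/idP.
- case/existsP => l /andP[]; rewrite in_setU1 => /orP[/eqP -> /= /eqP -> //|].
  case/imsetP => l' l'in -> /= /eqP e; apply/orP; right.
  by apply/existsP; exists l'; rewrite l'in /= -ag e.
- case/orP => [h | /existsP [l /andP[lin /eqP e]]]; apply/existsP.
  + by exists (inr c, true); rewrite setU11 /= h.
  + exists (inl l.1, l.2); rewrite in_setU1 /=.
    rewrite (@imset_f _ _ (fun l0 : V * bool => (inl l0.1, l0.2))) ?orbT //=.
    by rewrite ag e.
Qed.

Lemma ind_iff (X : {ffun V -> bool}) (Z : {ffun vars' C -> bool}) :
  (agrees X Z && all_sat' Z) = [forall x, ind X x (Z x)].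
Proof.
apply/idP/idP.
- case/andP => /forallP ag /forallP sat; apply/forallP => -[v|c] /=.
    exact: ag.
  have := sat (ext_clause c).
  rewrite (imset_f (fun c0 => ext_clause c0)) ?inE // /= (ext_sat X).
    by rewrite orbC.
  by move=> v; apply/eqP.
- move/forallP => h.
  have ag : agrees X Z by apply/forallP => v; exact: (h (inl v)).
  rewrite ag /=; apply/forallP => c'; apply/implyP => /imsetP [c _ ->].
  rewrite (ext_sat X); first by rewrite orbC; exact: (h (inr c)).
  by move=> v; apply/eqP; move/forallP: ag.
Qed.

Lemma prod_G (X : {ffun V -> bool}) (Z : {ffun vars' C -> bool}) :
  \prod_x G X x (Z x) = if agrees X Z && all_sat' Z then prodP theta Z else 0.
Proof.
rewrite ind_iff; case E: [forall x, ind X x (Z x)].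
- by apply: eq_bigr => x _; rewrite /G (forallP E x).
- move/negbT: E; rewrite negb_forall => /existsP [x hx].
  by rewrite (bigD1 x) //= /G (negbTE hx) mul0r.
Qed.

Definition N (X : {ffun V -> bool}) : R :=
  \prod_(c : clauseIdx C) (if clause_sat X (val c) then 1 else expR (- theta)).

Lemma num (X : {ffun V -> bool}) : PrP theta (fun Z : {ffun vars' C -> bool} => agrees X Z && all_sat' Z) = (2^-1)^+#|V| * N X.
Proof.
have -> : PrP theta (fun Z : {ffun vars' C -> bool} => agrees X Z && all_sat' Z) =
          \sum_(Z : {ffun vars' C -> bool}) \prod_x G X x (Z x).
  by rewrite /PrP big_mkcond; apply: eq_bigr => Z _; rewrite prod_G.
rewrite -(bigA_distr_bigA (fun x b => G X x b)) big_sumType /=.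
congr (_ * _).
- rewrite -prodr_const; apply: eq_bigr => v _.
  by rewrite big_bool /G /=; case: (X v) => /=; rewrite ?addr0 ?add0r.
- rewrite /N; apply: eq_bigr => c _; rewrite big_bool /G /=.
  by case: (clause_sat X (val c)) => /=; rewrite ?addr0 // addrC subrK.
Qed.

Lemma N_eq (X : {ffun V -> bool}) : N X = expR (- theta * #|unsat_clauses C X|%:R).
Proof.
rewrite expRM_natr /N.
have -> : #|unsat_clauses C X| = #|[pred c : clauseIdx C | ~~ clause_sat X (val c)]|.
  rewrite -(@card_imset (clauseIdx C) _ val [pred c : clauseIdx C | ~~ clause_sat X (val c)] val_inj); apply: eq_card => c.
  rewrite [in LHS]inE; apply/andP/imsetP => [[cC ns]|[c' hc' ->]].
    by exists (Sub c cC) => //; rewrite inE /= SubK.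
  by split; [exact: valP | rewrite inE in hc'].
rewrite -prodr_const [RHS]big_mkcond; apply: eq_bigr => c _.
by rewrite inE; case: (clause_sat X (val c)).
Qed.

End Proof7p9.

Theorem proposition7p9 (R : realType) (V : finType) (C : {set clause V})
  (theta : R) (htheta : 0 <= theta) (X : {ffun V -> bool}) :
  condPr theta (agrees X) (@all_sat' V C) = mu_theta C theta X.
Proof.
rewrite /condPr num.
have -> : PrP theta (@all_sat' V C) =
          \sum_Y PrP theta (fun Z : {ffun vars' C -> bool} => agrees Y Z && all_sat' Z).
  rewrite /PrP (partition_big (fun Z : {ffun vars' C -> bool} =>
                   [ffun v => Z (inl v)]) predT) //=.
  apply: eq_bigr => Y _; apply: eq_bigl => Z; rewrite andbC; congr (_ && _).
  apply/eqP/forallP => [<- v|h]; first by rewrite ffunE.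
  by apply/ffunP => v; rewrite ffunE; apply/eqP.
under eq_bigr do rewrite num.
rewrite -mulr_sumr invfM mulrACA mulfV ?mul1r.
  by rewrite /mu_theta N_eq; congr (_ / _); apply: eq_bigr => Y _; rewrite N_eq.
by rewrite expf_neq0 // invr_eq0 pnatr_eq0.
Qed.
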